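(* Let $f:X\to\mathcal G$ be a convex function and $x_0\in\operatorname{dom} f$. Suppose that either (i) $x_0$ solves the set-valued Stampacchia inequality: $f(x_0)=Z$, or for all $x\in\operatorname{dom} f$ with $f(x)\neq f(x_0)$ one has $0\notin f'(x_0,x-x_0)$; or (ii) for all $x\in\operatorname{dom} f$ with $f(x_0)\ne f(x)$ there exists $z^*\in C^-\setminus\{0\}$ such that $-\infty=\varphi_{f,z^*}(x_0)<\varphi_{f,z^*}(x)$ or $0<\varphi'_{f,z^*}(x_0,x-x_0)$. Then $x_0$ is a minimizer of $f$, i.e. $f(x_0)\in\operatorname{Min} f[X]$: for every $x\in X$, $f(x)\supseteq f(x_0)$ implies $f(x)=f(x_0)$.
   Context: $X$ is a real linear space and $Z$ a real locally convex Hausdorff space with topological dual $Z^*$. $C\subseteq Z$ is a closed convex cone with $0\in C$ such that $C^-=\{z^*\in Z^*: z^*(c)\le 0\ \forall c\in C\}$ satisfies $C^-\setminus\{0\}\ne\emptyset$. Let $\mathcal G=\{A\subseteq Z: A=\operatorname{cl}\operatorname{co}(A+C)\}$. For $A,B\in\mathcal G$: $A\oplus B=\operatorname{cl}\{a+b\}$, $tA=\{ta\}$ for $t>0$, $A\ominus B=\{z\in Z: B+\{z\}\subseteq A\}$. $f:X\to\mathcal G$ is convex if $f(tx_1+(1-t)x_2)\supseteq tf(x_1)\oplus(1-t)f(x_2)$ for $t\in(0,1)$; $\operatorname{dom}f=\{x:f(x)\ne\emptyset\}$. $f'(x,u)=\bigcap_{t_0>0}\operatorname{cl}\operatorname{co}\bigcup_{0<t<t_0}\frac1t\big(f(x+tu)\ominus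 f(x)\big)$. On $\overline{\mathbb R}$ use inf-addition $\dot+$ ($(-\infty)\dot+(+\infty)=+\infty$) and $r\ominus s=\inf\{t\in\mathbb R:r\le s\dot+t\}$ ($\inf\emptyset=+\infty$). $\varphi_{f,z^*}(x)=\inf\{-z^*(z):z\in f(x)\}$ ($+\infty$ if $f(x)=\emptyset$), $\varphi'_{f,z^*}(x,u)=\inf_{t>0}\frac1t\big(\varphi_{f,z^*}(x+tu)\ominus\varphi_{f,z^*}(x)\big)$. *)

(* Defs.v *)
From HB Require Import structures.
From mathcomp Require Import all_boot all_order all_algebra.
From mathcomp Require Import all_classical all_reals all_analysis.
Set Implicit Arguments. Unset Strict Implicit. Unset Printing Implicit Defensive.
Import Order.TTheory GRing.Theory Num.Theory.
Import numFieldNormedType.Exports.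
Local Open Scope classical_set_scope.
Local Open Scope ring_scope.

Section SetValued.
Variable R : realType.

Definition cvx {V : lmodType R} (A : set V) : Prop :=
  forall x y (t : R), A x -> A y -> 0 <= t -> t <= 1 ->
    A (t *: x + (1 - t) *: y).

Definition conv_hull {V : lmodType R} (A : set V) : set V :=
  [set z | forall D : set V, cvx D -> A `<=` D -> D z].

Definition clco {Z : tvsType R} (A : set Z) : set Z := closure (conv_hull A).

Definition msum {V : lmodType R} (A B : set V) : set V :=
  [set a + b | a in A & b in B].

Definition oplus {Z : tvsType R} (A B : set Z) : set Z := closure (msum A B).

Definition sscale {V : lmodType R} (t : R) (A : set V) : set V :=
  [set t *: a | a in A].

Definition ominus {V : lmodType R} (A B : set V) : set V :=
  [set z | forall b, B b -> A (b + z)].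

Definition is_dual {Z : tvsType R} (zs : Z -> R) : Prop :=
  (forall (a : R) (u v : Z), zs (a *: u + v) = a * zs u + zs v) /\
  continuous zs.

Definition closed_convex_cone {Z : tvsType R} (C : set Z) : Prop :=
  closed C /\ cvx C /\ C 0 /\ (forall (t : R) c, 0 < t -> C c -> C (t *: c)).

Definition in_negdual {Z : tvsType R} (C : set Z) (zs : Z -> R) : Prop :=
  is_dual zs /\ (forall c, C c -> zs c <= 0).

Definition in_G {Z : tvsType R} (C : set Z) (A : set Z) : Prop :=
  A = clco (msum A C).

Definition sv_convex {X : lmodType R} {Z : tvsType R} (f : X -> set Z) : Prop :=
  forall (t : R) x1 x2, 0 < t -> t < 1 ->
    oplus (sscale t (f x1)) (sscale (1 - t) (f x2)) `<=`
    f (t *: x1 + (1 - t) *: x2).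

Definition sv_dom {X : lmodType R} {Z : tvsType R} (f : X -> set Z) : set X :=
  [set x | f x <> set0].

Definition sv_deriv {X : lmodType R} {Z : tvsType R} (f : X -> set Z)
    (x u : X) : set Z :=
  \bigcap_(t0 in [set t0 : R | 0 < t0])
    clco (\bigcup_(t in [set t : R | 0 < t < t0])
            sscale t^-1 (ominus (f (x + t *: u)) (f x))).

Local Open Scope ereal_scope.

Definition inf_add (r s : \bar R) : \bar R :=
  if ((r == -oo) && (s == +oo)) || ((r == +oo) && (s == -oo)) then +oo
  else r + s.

(* r (-) s = inf {t in R | r <= s +. t}, inf of empty = +oo *)
Definition eminus (r s : \bar R) : \bar R :=
  ereal_inf [set t%:E | t in [set t : R | r <= inf_add s t%:E]].

(* phi_{f,z*}(x) = inf {- z*(z) | z in f x}  (+oo if f x empty) *)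
Definition phi {X : lmodType R} {Z : tvsType R} (f : X -> set Z)
    (zs : Z -> R) (x : X) : \bar R :=
  ereal_inf [set (- zs z)%:E | z in f x].

Definition phi_deriv {X : lmodType R} {Z : tvsType R} (f : X -> set Z)
    (zs : Z -> R) (x u : X) : \bar R :=
  ereal_inf [set (t^-1)%:E * eminus (phi f zs (x + t *: u)) (phi f zs x)
            | t in [set t : R | (0 < t)%R]].

End SetValued.

(* Main.v *)
Require Import Defs.
From HB Require Import structures.
From mathcomp Require Import all_boot all_order all_algebra.
From mathcomp Require Import all_classical all_reals all_analysis.
Import Order.TTheory GRing.Theory Num.Theory.
Local Open Scope classical_set_scope.
Local Open Scope ring_scope.

Lemma seg_sub (R : realType) (X : lmodType R) (Z : tvsType R)
    (f : X -> set Z) (x0 x : X) (t : R) :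
  sv_convex f -> 0 < t -> t < 1 -> f x0 `<=` f x ->
  f x0 `<=` f (x0 + t *: (x - x0)).
Proof.
move=> hc t0 t1 hsub z hz.
have -> : x0 + t *: (x - x0) = t *: x + (1 - t) *: x0.
  by rewrite scalerBr scalerBl scale1r addrCA addrC.
apply: (hc t x x0 t0 t1); apply: subset_closure.
exists (t *: z); first by exists z => //; exact: hsub.
exists ((1 - t) *: z); first by exists z.
by rewrite -scalerDl addrCA subrr addr0 scale1r.
Qed.

Lemma phi_le (R : realType) (X : lmodType R) (Z : tvsType R)
    (f : X -> set Z) zs (x y : X) :
  f x `<=` f y -> (phi f zs y <= phi f zs x)%E.
Proof.
move=> h; apply: le_ereal_inf => _ [z hz <-]; exists z => //; exact: h.
Qed.

Lemma eminus_le0 (R : realType) (r s : \bar R) : (r <= s)%E -> (eminus r s <= 0)%E.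
Proof.
move=> h; rewrite /eminus; apply: ereal_inf_lbound; exists 0%R => //=.
rewrite /inf_add; case: s h => [s'| |] h //=; by rewrite ?adde0.
Qed.
Arguments seg_sub {R X Z f x0 x t}.
Arguments phi_le {R X Z f} zs {x y}.
Arguments eminus_le0 {R r s}.

Theorem mainTheorem3 (R : realType) (X : lmodType R) (Z : tvsType R)
    (C : set Z) (f : X -> set Z) (x0 : X) :
  hausdorff_space Z ->
  closed_convex_cone C ->
  (exists zs : Z -> R, in_negdual C zs /\ zs <> (fun=> 0)) ->
  (forall x, in_G C (f x)) ->
  sv_convex f ->
  sv_dom f x0 ->
  ( (f x0 = setT \/
     (forall x, sv_dom f x -> f x <> f x0 -> ~ sv_deriv f x0 (x - x0) 0))
    \/
    (forall x, sv_dom f x -> f x0 <> f x ->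
       exists zs : Z -> R, in_negdual C zs /\ zs <> (fun=> 0) /\
         ((phi f zs x0 = -oo%E /\ (-oo < phi f zs x)%E) \/
          (0 < phi_deriv f zs x0 (x - x0))%E)) ) ->
  forall x, f x0 `<=` f x -> f x = f x0.
Proof.
move=> _ _ _ _ hc hdom H x hsub.
have domx : sv_dom f x.
  move=> hx; apply: hdom; apply/seteqP; split => // z hz; rewrite -hx; exact: hsub.
case: (pselect (f x = f x0)) => // hne.
exfalso.
case: H => [[hT|hi]|hii].
- by apply: hne; apply/seteqP; split => // z _; rewrite hT.
- apply: (hi x domx hne) => t0 /= t0pos.
  set t := Num.min (t0 / 2) (2^-1 : R).
  have tpos : 0 < t by rewrite lt_min divr_gt0 //= invr_gt0.
  have tlt1 : t < 1.
    by rewrite /t gt_min; apply/orP; right; rewrite invf_lt1 // ltr1n.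
  have tlt0 : t < t0.
    by rewrite /t gt_min; apply/orP; left; rewrite ltr_pdivrMr // ltr_pMr // ltr1n.
  apply: subset_closure => D _ hD; apply: hD.
  exists t; first by rewrite /= tpos.
  exists 0; last by rewrite scaler0.
  move=> b hb; rewrite addr0; exact: (seg_sub hc tpos tlt1 hsub) _ hb.
- have [zs [_ [_ [[h1 h2]|h3]]]] := hii x domx (nesym hne).
    have := phi_le zs hsub; rewrite h1 leeNy_eq => /eqP e.
    by move: h2; rewrite e ltxx.
  have h2pos : 0 < (2^-1 : R) by rewrite invr_gt0.
  have h2lt1 : (2^-1 : R) < 1 by rewrite invf_lt1 // ltr1n.
  have : (phi_deriv f zs x0 (x - x0) <= 0)%E.
    apply: (@le_trans _ _ ((2^-1 : R)^-1%:E * eminus (phi f zs (x0 + 2^-1 *: (x - x0))) (phi f zs x0))%E).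
      by apply: ereal_inf_lbound; exists (2^-1 : R).
    apply: mule_ge0_le0; first by rewrite lee_fin invr_ge0 ltW.
    apply: eminus_le0; apply: phi_le; exact: (seg_sub hc h2pos h2lt1 hsub).
  by rewrite leNgt h3.
Qed.
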